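(* Let $a\in C[0,1]$ change sign in $(0,1)$, and let $\Omega_-:=a^{-1}((-\infty,0))\subset[0,1]$. For every $\lambda<\pi^2$, let $u_\lambda$ be a positive solution of $$-u''=\lambda u+a(x)u^2\ \text{ in }(0,1),\qquad u(0)=u(1)=0.$$ Then $$\lim_{\lambda\downarrow-\infty}u_\lambda(x)=0\quad\text{for all }x\in\Omega_-,$$ uniformly on compact subintervals of $\Omega_-$. *)

(* Defs.v *)
From Stdlib Require Import Reals Lra.
From Coquelicot Require Import Coquelicot.
Open Scope R_scope.

Definition continuous_on_01 (a : R -> R) : Prop :=
  forall x, 0 <= x <= 1 ->
    filterlim a (within (fun y => 0 <= y <= 1) (locally x)) (locally (a x)).

Definition changes_sign_01 (a : R -> R) : Prop :=
  (exists x, 0 < x < 1 /\ 0 < a x) /\ (exists x, 0 < x < 1 /\ a x < 0).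

Definition Omega_minus (a : R -> R) (x : R) : Prop := 0 <= x <= 1 /\ a x < 0.

Definition positive_solution (a : R -> R) (lam : R) (u : R -> R) : Prop :=
  continuous_on_01 u /\
  (forall x, 0 < x < 1 ->
     ex_derive u x /\ ex_derive (Derive u) x /\
     - Derive (Derive u) x = lam * u x + a x * (u x) ^ 2) /\
  u 0 = 0 /\ u 1 = 0 /\
  (forall x, 0 < x < 1 -> 0 < u x).

(* Main.v *)
Require Import Defs.
From Stdlib Require Import Reals Lra Lia ZArith.
From Coquelicot Require Import Coquelicot.
Open Scope R_scope.

Lemma nat_unbounded (X : R) : exists n : nat, X < INR n.
Proof.
  destruct (archimed X) as [H1 H2].
  destruct (Z_lt_le_dec (up X) 0%Z) as [Hn|Hp].
  - exists 0%nat. simpl. apply IZR_lt in Hn. lra.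
  - exists (Z.to_nat (up X)). rewrite INR_IZR_INZ, Z2Nat.id; [lra | lia].
Qed.

Lemma pow2_ge (k : nat) : INR k + 1 <= 2 ^ k.
Proof.
  induction k as [|k IH]; [simpl pow; change (INR 0) with 0; lra|].
  rewrite S_INR; simpl; assert (H0 := pos_INR k); lra.
Qed.

Lemma mono (h dh : R -> R) x y : x <= y ->
  (forall z, x <= z <= y -> is_derive h z (dh z)) ->
  (forall z, x <= z <= y -> 0 <= dh z) -> h x <= h y.
Proof.
  intros Hxy Hd Hp.
  destruct (MVT_gen h x y dh) as [c [Hc Heq]].
  - intros z Hz. rewrite Rmin_left, Rmax_right in Hz by lra. apply Hd; lra.
  - intros z Hz. rewrite Rmin_left, Rmax_right in Hz by lra.
    apply continuity_pt_filterlim. apply (ex_derive_continuous (K:=R_AbsRing) (V:=R_NormedModule)).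
    exists (dh z). apply Hd; lra.
  - rewrite Rmin_left, Rmax_right in Hc by lra.
    assert (0 <= dh c * (y - x)) by (apply Rmult_le_pos; [apply Hp; lra| lra]).
    lra.
Qed.

Section Core.
Variables (f g : R -> R) (p e mu al : R).
Hypothesis Hf : forall x, p <= x <= e -> is_derive f x (g x).
Hypothesis Hg : forall x, p <= x <= e -> exists d, is_derive g x d /\ mu * f x + al * (f x)^2 <= d.
Hypothesis Hpos : forall x, p <= x <= e -> 0 < f x.
Hypothesis Hg0 : 0 <= g p.
Hypothesis Hmu : 0 <= mu.
Hypothesis Hal : 0 < al.

Lemma g_nonneg : forall x, p <= x <= e -> 0 <= g x.
Proof.
  intros x Hx.
  assert (Hd : forall z, p <= z <= e -> is_derive g z (Derive g z) /\ 0 <= Derive g z).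
  { intros z Hz. destruct (Hg z Hz) as [d [Hd Hle]].
    rewrite (is_derive_unique _ _ _ Hd). split; [exact Hd|].
    specialize (Hpos z Hz). nra. }
  assert (g p <= g x). { apply (mono g (Derive g)); [lra| |]; intros z Hz; apply Hd; lra. }
  lra.
Qed.

Lemma f_mono : forall x y, p <= x -> x <= y -> y <= e -> f x <= f y.
Proof.
  intros x y H1 H2 H3. apply (mono f g); [lra| |]; intros z Hz.
  - apply Hf; lra.
  - apply g_nonneg; lra.
Qed.

Lemma d_lin c q z : is_derive (fun z => c * (z - q)) z c.
Proof. auto_derive; [trivial| ring]. Qed.
Lemma d_quad c q z : is_derive (fun z => c * (z - q)^2/2) z (c * (z - q)).
Proof. auto_derive; [trivial| simpl; field]. Qed.
Lemma d_minus (f1 g1 : R -> R) z a b : is_derive f1 z a -> is_derive g1 z b -> is_derive (fun z => f1 z - g1 z) z (a - b).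
Proof. intros. apply @is_derive_minus; eauto. Qed.

Lemma step : forall q r c, p <= q -> q <= r -> r <= e ->
  c <= mu * f q + al * (f q)^2 -> f q + c * (r - q)^2 / 2 <= f r.
Proof.
  intros q r c H1 H2 H3 Hc.
  assert (Hgq : forall x, q <= x <= r -> c * (x - q) <= g x).
  { intros x Hx.
    assert (Hm : g q - c * (q - q) <= g x - c * (x - q)).
    { apply (mono (fun z => g z - c * (z - q)) (fun z => Derive g z - c)); [lra| |].
      - intros z Hz. destruct (Hg z ltac:(lra)) as [d [Hd _]].
        rewrite (is_derive_unique _ _ _ Hd).
        apply d_minus; [exact Hd| apply d_lin].
      - intros z Hz. destruct (Hg z ltac:(lra)) as [d [Hd Hle]].
        rewrite (is_derive_unique _ _ _ Hd).
        assert (Hfq := Hpos q ltac:(lra)).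
        assert (Hfz : f q <= f z) by (apply f_mono; lra).
        assert (f q ^ 2 <= f z ^ 2) by nra.
        nra. }
    assert (0 <= g q) by (apply g_nonneg; lra). lra. }
  assert (Hm : f q - c * (q - q)^2/2 <= f r - c * (r - q)^2/2).
  { apply (mono (fun z => f z - c * (z - q)^2/2) (fun z => g z - c * (z - q))); [lra| |].
    - intros z Hz. apply d_minus; [apply Hf; lra| apply d_quad].
    - intros z Hz. specialize (Hgq z Hz). lra. }
  lra.
Qed.

Lemma phase1 : forall h, 0 < h -> 2 <= mu * h^2 ->
  forall k : nat, p + INR k * h <= e -> 2 ^ k * f p <= f (p + INR k * h).
Proof.
  intros h Hh Hmh k. induction k as [|k IH]; intros Hk.
  - simpl. replace (p + 0 * h) with p by ring. lra.
  - rewrite S_INR in Hk |- *.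
    assert (Hk' : p + INR k * h <= e) by lra.
    specialize (IH Hk').
    assert (H0 := pos_INR k).
    pose (q := p + INR k * h).
    assert (Hs := step q (q + h) (mu * f q) ltac:(unfold q; nra) ltac:(lra) ltac:(unfold q; lra)).
    assert (Hfq : 0 < f q) by (apply Hpos; unfold q; nra).
    assert (Hsq : 0 <= al * f q ^ 2) by (apply Rmult_le_pos; [lra| apply pow2_ge_0]).
    specialize (Hs ltac:(lra)).
    replace (q + h - q) with h in Hs by ring.
    replace (p + (INR k + 1) * h) with (q + h) by (unfold q; ring).
    assert (2 * f q <= f q + mu * f q * h ^ 2 / 2) by nra.
    simpl. fold q in IH. lra.
Qed.

Lemma phase2 : forall q0 W H, p <= q0 -> 0 < W -> 0 < H -> 6 <= al * W * H^2 ->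
  q0 + 2 * H <= e -> W <= f q0 -> False.
Proof.
  intros q0 W H Hq0 HW HH Hal6 He Hf0.
  assert (Hk : forall k : nat, q0 + 2 * H * (1 - / 2 ^ k) <= e /\
                 W * (2 ^ k)^2 <= f (q0 + 2 * H * (1 - / 2 ^ k))).
  { induction k as [|k [IH1 IH2]].
    - simpl. replace (q0 + 2 * H * (1 - / 1)) with q0 by field. split; lra.
    - assert (Hp2 : 0 < 2 ^ k) by (apply pow_lt; lra).
      pose (q := q0 + 2 * H * (1 - / 2 ^ k)).
      fold q in IH1, IH2.
      assert (Eq : q0 + 2 * H * (1 - / 2 ^ S k) = q + H / 2 ^ k)
        by (unfold q; simpl; field; lra).
      rewrite Eq.
      assert (Hinv : / 2 ^ S k > 0) by (apply Rinv_0_lt_compat; apply pow_lt; lra).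
      assert (Hr : q + H / 2 ^ k <= e).
      { rewrite <- Eq. assert (2 * H * / 2 ^ S k > 0) by nra. nra. }
      assert (Hpq : p <= q).
      { unfold q. assert (/ 2 ^ k <= 1).
        { replace 1 with (/ 1) by field. apply Rinv_le_contravar; [lra|].
          clear -k. induction k; simpl; lra. }
        nra. }
      assert (Hhk : 0 < H / 2 ^ k) by (apply Rdiv_lt_0_compat; lra).
      assert (Hfq : 0 < f q) by (apply Hpos; lra).
      assert (Hs := step q (q + H / 2 ^ k) (al * f q ^ 2) Hpq ltac:(lra) Hr).
      assert (Hmf : 0 <= mu * f q) by nra.
      specialize (Hs ltac:(lra)).
      replace (q + H / 2 ^ k - q) with (H / 2 ^ k) in Hs by ring.
      split; [exact Hr|].
      assert (Key : 3 * f q <= al * f q ^ 2 * (H / 2 ^ k) ^ 2 / 2).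
      { replace (al * f q ^ 2 * (H / 2 ^ k) ^ 2 / 2)
          with (f q * (al * f q * H^2 / (2 ^ k)^2 / 2)) by (field; lra).
        rewrite (Rmult_comm 3). apply Rmult_le_compat_l; [lra|].
        (* need: al*fq*H^2/(2^k)^2/2 >= 3 ; use fq >= W 4^k *)
        assert (Hx : al * W * H^2 * (2^k)^2 <= al * f q * H^2).
        { assert (0 < al * H^2) by (apply Rmult_lt_0_compat; [lra| nra]). nra. }
        assert (Hq2 : 0 < (2^k)^2) by nra.
        apply (Rmult_le_reg_r ((2^k)^2)); [exact Hq2|].
        replace (al * f q * H ^ 2 / (2 ^ k) ^ 2 / 2 * (2 ^ k) ^ 2) with (al * f q * H^2 / 2) by (field; lra).
        nra. }
      simpl. nra. }
  assert (Hfe : forall k : nat, W * (2 ^ k) ^ 2 <= f (q0 + 2 * H)).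
  { intros k. destruct (Hk k) as [H1 H2].
    assert (Hp2 : 0 < 2 ^ k) by (apply pow_lt; lra).
    assert (f (q0 + 2 * H * (1 - / 2 ^ k)) <= f (q0 + 2 * H)).
    { apply f_mono.
      - assert (/ 2 ^ k <= 1).
        { replace 1 with (/ 1) by field. apply Rinv_le_contravar; [lra|].
          clear -k. induction k; simpl; lra. }
        nra.
      - assert (0 < / 2 ^ k) by (apply Rinv_0_lt_compat; lra). nra.
      - lra. }
    lra. }
  destruct (nat_unbounded (f (q0 + 2 * H) / W)) as [n Hn].
  specialize (Hfe n). assert (H1 := pow2_ge n).
  assert (f (q0 + 2*H) < INR n * W) by (apply (Rmult_lt_reg_r (/ W)); [apply Rinv_0_lt_compat; lra|];
    replace (INR n * W * / W) with (INR n) by (field; lra); unfold Rdiv in Hn; lra).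
  assert (INR n * W <= W * (2^n)^2).
  { assert (1 <= 2^n) by (clear; induction n; simpl; lra).
    assert (INR n <= (2^n)^2) by nra.
    rewrite (Rmult_comm W). apply Rmult_le_compat_r; lra. }
  lra.
Qed.
End Core.

Lemma core (eps dl al : R) : 0 < eps -> 0 < dl -> 0 < al ->
  exists M, 0 < M /\ forall (f g : R -> R) p mu, M <= mu ->
  (forall x, p <= x <= p + dl -> is_derive f x (g x)) ->
  (forall x, p <= x <= p + dl -> exists d, is_derive g x d /\ mu * f x + al * (f x)^2 <= d) ->
  (forall x, p <= x <= p + dl -> 0 < f x) ->
  0 <= g p -> f p < eps.
Proof.
  intros He Hd Ha.
  set (H := dl / 4). set (W := 6 / (al * H^2)).
  assert (HH : 0 < H) by (unfold H; lra).
  assert (HW : 0 < W) by (unfold W; apply Rdiv_lt_0_compat; [lra| apply Rmult_lt_0_compat; [lra|nra]]).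
  destruct (nat_unbounded (W / eps)) as [k0 Hk0].
  set (k := S k0).
  assert (Hk : W <= 2 ^ k * eps).
  { assert (H1 := pow2_ge k). unfold k in *. rewrite S_INR in H1.
    assert (W / eps * eps = W) by (field; lra).
    assert (W / eps <= 2 ^ S k0) by lra. nra. }
  assert (Hkpos : 0 < INR k) by (unfold k; rewrite S_INR; assert (H0 := pos_INR k0); lra).
  set (h := dl / (2 * INR k)).
  assert (Hh : 0 < h) by (unfold h; apply Rdiv_lt_0_compat; lra).
  exists (2 / h^2). split; [apply Rdiv_lt_0_compat; [lra|nra]|].
  intros f g p mu HM Hf Hg Hpos Hg0.
  assert (Hmu2 : 2 <= mu * h^2).
  { assert (0 < h^2) by nra.
    apply (Rmult_le_compat_r (h^2)) in HM; [|lra].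
    replace (2 / h ^ 2 * h ^ 2) with 2 in HM by (field; lra). exact HM. }
  assert (Hmu : 0 <= mu) by (assert (0 < 2 / h^2) by (apply Rdiv_lt_0_compat; [lra|nra]); lra).
  destruct (Rlt_or_le (f p) eps) as [Hlt|Hge]; [exact Hlt|exfalso].
  assert (Hkh : INR k * h = dl / 2) by (unfold h; field; lra).
  assert (P1 := phase1 f g p (p + dl) mu al Hf Hg Hpos Hg0 Hmu Ha h Hh Hmu2 k ltac:(lra)).
  rewrite Hkh in P1.
  assert (Hp2 : 0 < 2 ^ k) by (apply pow_lt; lra).
  apply (phase2 f g p (p + dl) mu al Hf Hg Hpos Hg0 Hmu Ha (p + dl/2) W H); try lra.
  - unfold W. right. field. split; [lra|]. apply Rgt_not_eq. nra.
  - unfold H; lra.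
  - nra.
Qed.

Lemma cont_eps (u : R -> R) : continuous_on_01 u -> forall x, 0 <= x <= 1 ->
  forall e, 0 < e -> exists dl, 0 < dl /\ forall y, 0 <= y <= 1 -> Rabs (y - x) < dl ->
  Rabs (u y - u x) < e.
Proof.
  intros Hc x Hx e He.
  destruct (Hc x Hx (ball (u x) e) (locally_ball (u x) (mkposreal e He))) as [d Hd].
  exists d. split; [apply cond_pos|]. intros y Hy Hxy.
  exact (Hd y Hxy Hy).
Qed.

Definition clamp (y : R) := Rmax 0 (Rmin 1 y).
Lemma clamp_in y : 0 <= clamp y <= 1.
Proof. unfold clamp, Rmax, Rmin; repeat destruct Rle_dec; lra. Qed.
Lemma clamp_id y : 0 <= y <= 1 -> clamp y = y.
Proof. unfold clamp, Rmax, Rmin; repeat destruct Rle_dec; lra. Qed.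
Lemma clamp_lip x y : Rabs (clamp y - clamp x) <= Rabs (y - x).
Proof. unfold clamp, Rmax, Rmin; repeat destruct Rle_dec; unfold Rabs; repeat destruct Rcase_abs; lra. Qed.

Lemma unif_neg (a : R -> R) : continuous_on_01 a -> forall c d, c <= d ->
  (forall x, c <= x <= d -> Omega_minus a x) ->
  exists al dl, 0 < al /\ 0 < dl /\ forall x y, c <= x <= d -> 0 <= y <= 1 ->
    Rabs (y - x) <= dl -> a y <= - al.
Proof.
  intros Ha c d Hcd Hom.
  set (at_ := fun y => a (clamp y)).
  assert (Hct : forall x, continuity_pt at_ x).
  { intros x. unfold continuity_pt, continue_in, limit1_in, limit_in. simpl.
    intros e He.
    destruct (cont_eps a Ha (clamp x) (clamp_in x) e He) as [dl [Hdl Hy]].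
    exists dl. split; [lra|]. intros y [_ Hyx]. unfold R_dist in *. unfold at_.
    apply Hy; [apply clamp_in|]. eapply Rle_lt_trans; [apply clamp_lip| exact Hyx]. }
  destruct (continuity_ab_maj at_ c d Hcd (fun z _ => Hct z)) as [Mx [HMx HMxin]].
  destruct (Hom Mx HMxin) as [HMx01 HaM].
  set (b := - a Mx).
  assert (Hb : 0 < b) by (unfold b; lra).
  destruct (Heine at_ (fun z => 0 <= z <= 1) (compact_P3 0 1) (fun z _ => Hct z)
     (mkposreal (b/2) ltac:(lra))) as [delta Hdelta].
  exists (b/2), (delta/2). split; [lra|]. split; [assert (H := cond_pos delta); lra|].
  intros x y Hx Hy Hyx.
  destruct (Hom x Hx) as [Hx01 _].
  assert (H1 := Hdelta y x Hy Hx01 ltac:(assert (H := cond_pos delta); lra)). simpl in H1.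
  assert (H2 := HMx x Hx).
  unfold at_ in H1, H2. rewrite (clamp_id y Hy), (clamp_id x Hx01) in H1.
  rewrite (clamp_id x Hx01), (clamp_id Mx HMx01) in H2.
  unfold b in *. apply Rabs_def2 in H1. lra.
Qed.

Lemma refl1 (u : R -> R) z : ex_derive u (-z) -> is_derive (fun z => u (-z)) z (- Derive u (-z)).
Proof.
  intros H.
  assert (H1 : is_derive (fun z => u (-z)) z (scal (-1) (Derive u (-z)))).
  { apply (is_derive_comp u (fun z => -z)). apply Derive_correct; exact H.
    auto_derive; [trivial| ring]. }
  replace (- Derive u (-z)) with (scal (-1) (Derive u (-z))). exact H1.
  unfold scal; simpl; unfold mult; simpl; ring.
Qed.

Lemma refl2 (u : R -> R) z : ex_derive (Derive u) (-z) ->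
  is_derive (fun z => - Derive u (-z)) z (Derive (Derive u) (-z)).
Proof.
  intros H. assert (H1 := refl1 (Derive u) z H).
  replace (Derive (Derive u) (-z)) with (- - Derive (Derive u) (-z)) by ring.
  apply (is_derive_opp (fun z => Derive u (-z))). exact H1.
Qed.

Theorem theorem3p1 (a : R -> R) (u : R -> R -> R)
  (Ha_cont : continuous_on_01 a)
  (Ha_sign : changes_sign_01 a)
  (Hu : forall lam, lam < PI ^ 2 -> positive_solution a lam (u lam)) :
  (* pointwise convergence to 0 on Omega_- *)
  (forall x, Omega_minus a x ->
     forall eps, 0 < eps -> exists L, forall lam, lam < L -> lam < PI ^ 2 ->
       Rabs (u lam x) < eps) /\
  (* uniform convergence on compact subintervals [c,d] of Omega_- *)
  (forall c d, c <= d -> (forall x, c <= x <= d -> Omega_minus a x) ->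
     forall eps, 0 < eps -> exists L, forall lam, lam < L -> lam < PI ^ 2 ->
       forall x, c <= x <= d -> Rabs (u lam x) < eps).
Proof.
  assert (Unif : forall c d, c <= d -> (forall x, c <= x <= d -> Omega_minus a x) ->
     forall eps, 0 < eps -> exists L, forall lam, lam < L -> lam < PI ^ 2 ->
       forall x, c <= x <= d -> Rabs (u lam x) < eps).
  { intros c d Hcd Hom eps Heps.
    destruct (unif_neg a Ha_cont c d Hcd Hom) as [al [dl [Hal [Hdl Hneg]]]].
    destruct (core eps dl al Heps Hdl Hal) as [M [HM Hcore]].
    exists (-M). intros lam Hlam Hlpi x Hx.
    destruct (Hu lam Hlpi) as [Hc [Hd [H0 [H1 Hp]]]].
    set (v := u lam) in *.
    destruct (Hom x Hx) as [Hx01 _].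
    destruct (Req_dec x 0) as [->|Hx0]; [rewrite H0, Rabs_R0; lra|].
    destruct (Req_dec x 1) as [->|Hx1]; [rewrite H1, Rabs_R0; lra|].
    assert (Hxin : 0 < x < 1) by lra.
    assert (Hvx := Hp x Hxin).
    rewrite Rabs_right by lra.
    destruct (Rlt_or_le (v x) eps) as [Hlt|Hge]; [exact Hlt|exfalso].
    set (mu := - lam).
    assert (HMmu : M <= mu) by (unfold mu; lra).
    assert (Hmu : 0 <= mu) by lra.
    assert (Kd : forall y, 0 < y < 1 -> Rabs (y - x) <= dl ->
      is_derive v y (Derive v y) /\ is_derive (Derive v) y (Derive (Derive v) y) /\
      mu * v y + al * (v y)^2 <= Derive (Derive v) y).
    { intros y Hy Hyx. destruct (Hd y Hy) as [E1 [E2 E3]].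
      split; [apply Derive_correct; exact E1|]. split; [apply Derive_correct; exact E2|].
      assert (Hay := Hneg x y Hx ltac:(lra) Hyx).
      assert (0 <= v y ^ 2) by apply pow2_ge_0.
      unfold mu. nra. }
    destruct (Rle_or_lt 0 (Derive v x)) as [Hder|Hder].
    -
      destruct (Rlt_or_le (x + dl) 1) as [Hin|Hout].
      + assert (Hr : forall y, x <= y <= x + dl -> 0 < y < 1 /\ Rabs (y - x) <= dl).
        { intros y Hy. split; [lra|]. rewrite Rabs_right; lra. }
        assert (Hlt := Hcore v (Derive v) x mu HMmu
          ltac:(intros y Hy; destruct (Hr y Hy) as [A B]; apply (Kd y A B))
          ltac:(intros y Hy; destruct (Hr y Hy) as [A B]; destruct (Kd y A B) as [_ [K2 K3]];
                exists (Derive (Derive v) y); split; assumption)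
          ltac:(intros y Hy; destruct (Hr y Hy) as [A B]; apply Hp; exact A)
          Hder).
        lra.
      + destruct (cont_eps v Hc 1 ltac:(lra) (v x) Hvx) as [dd [Hdd Hcont]].
        set (y := Rmax x (1 - dd/2)).
        assert (Hy1 : x <= y < 1) by (unfold y, Rmax; destruct Rle_dec; lra).
        assert (Hyd : Rabs (y - 1) < dd) by (unfold y, Rmax; destruct Rle_dec; rewrite Rabs_left; lra).
        assert (Hr : forall z, x <= z <= y -> 0 < z < 1 /\ Rabs (z - x) <= dl).
        { intros z Hz. split; [lra|]. rewrite Rabs_right; lra. }
        assert (Hm := f_mono v (Derive v) x y mu al
          ltac:(intros z Hz; destruct (Hr z Hz) as [A B]; apply (Kd z A B))
          ltac:(intros z Hz; destruct (Hr z Hz) as [A B]; destruct (Kd z A B) as [_ [K2 K3]];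
                exists (Derive (Derive v) z); split; assumption)
          ltac:(intros z Hz; destruct (Hr z Hz) as [A B]; apply Hp; exact A)
          Hder Hmu Hal x y (Rle_refl x) (proj1 Hy1) (Rle_refl y)).
        assert (Hcy := Hcont y ltac:(lra) Hyd). rewrite H1, Rminus_0_r in Hcy.
        rewrite Rabs_right in Hcy by (assert (H := Hp y ltac:(lra)); lra). lra.
    -
      set (f := fun z => v (-z)). set (g := fun z => - Derive v (-z)).
      assert (Kr : forall z, 0 < -z < 1 -> Rabs (-z - x) <= dl ->
        is_derive f z (g z) /\ (exists d0, is_derive g z d0 /\ mu * f z + al * (f z)^2 <= d0)).
      { intros z Hz Hzx. destruct (Hd (-z) Hz) as [E1 [E2 E3]].
        destruct (Kd (-z) Hz Hzx) as [_ [_ K3]].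
        split; [apply refl1; exact E1|].
        exists (Derive (Derive v) (-z)). split; [apply refl2; exact E2| exact K3]. }
      assert (Hg0 : 0 <= g (-x)) by (unfold g; rewrite Ropp_involutive; lra).
      destruct (Rlt_or_le 0 (x - dl)) as [Hin|Hout].
      + assert (Hr : forall z, -x <= z <= -x + dl -> 0 < -z < 1 /\ Rabs (-z - x) <= dl).
        { intros z Hz. split; [lra|]. rewrite Rabs_left1; lra. }
        assert (Hlt := Hcore f g (-x) mu HMmu
          ltac:(intros z Hz; destruct (Hr z Hz) as [A B]; apply (Kr z A B))
          ltac:(intros z Hz; destruct (Hr z Hz) as [A B]; apply (Kr z A B))
          ltac:(intros z Hz; destruct (Hr z Hz) as [A B]; apply Hp; exact A)
          Hg0).
        unfold f in Hlt. rewrite Ropp_involutive in Hlt. lra.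
      + destruct (cont_eps v Hc 0 ltac:(lra) (v x) Hvx) as [dd [Hdd Hcont]].
        set (y := Rmin x (dd/2)).
        assert (Hy1 : 0 < y <= x) by (unfold y, Rmin; destruct Rle_dec; lra).
        assert (Hyd : Rabs (y - 0) < dd) by (unfold y, Rmin; destruct Rle_dec; rewrite Rabs_right; lra).
        assert (Hr : forall z, -x <= z <= -y -> 0 < -z < 1 /\ Rabs (-z - x) <= dl).
        { intros z Hz. split; [lra|]. rewrite Rabs_left1; lra. }
        assert (Hm := f_mono f g (-x) (-y) mu al
          ltac:(intros z Hz; destruct (Hr z Hz) as [A B]; apply (Kr z A B))
          ltac:(intros z Hz; destruct (Hr z Hz) as [A B]; apply (Kr z A B))
          ltac:(intros z Hz; destruct (Hr z Hz) as [A B]; apply Hp; exact A)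
          Hg0 Hmu Hal (-x) (-y) (Rle_refl _) ltac:(lra) (Rle_refl _)).
        unfold f in Hm. rewrite !Ropp_involutive in Hm.
        assert (Hcy := Hcont y ltac:(lra) Hyd). rewrite H0, Rminus_0_r in Hcy.
        rewrite Rabs_right in Hcy by (assert (H := Hp y ltac:(lra)); lra). lra. }
  split; [|exact Unif].
  intros x Hx eps Heps.
  destruct (Unif x x (Rle_refl x) ltac:(intros y Hy; replace y with x by lra; exact Hx) eps Heps)
    as [L HL].
  exists L. intros lam H1 H2. apply (HL lam H1 H2 x). lra.
Qed.
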